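(* The map $\Psi:\mathcal{FL}_{\mathrm{T}}\to\mathcal{D}^+_{\mathrm{T}}$, $[\mathcal{F}]\mapsto (t^{\mathcal{F}}_\ast,e^{\mathcal{F}}_\ast)$, is a homeomorphism. Moreover $\mathcal{D}^+_{\mathrm{T}}$ is homeomorphic to $\mathbb{R}^5_{>0}$ via $(t_\ast,e_\ast)\mapsto(e_{12},e_{13},e_{23},e_{14},e_{24})$; hence $\mathcal{FL}_{\mathrm{T}}\cong\mathbb{R}^5_{>0}$.
   Context: Flags in $\mathbb{RP}^3$ are pairs $(V,\eta)$, $\eta$ a plane through the point $V$; a tuple is non-degenerate if $\eta_i(V_j)=0\iff i=j$. A tetrahedron of flags is a non-degenerate ordered quadruple $(V_m,\eta_m)_{m=1}^4$ with the $V_m$ not coplanar such that some projective tetrahedron with vertices $V_1,\dots,V_4$ has interior disjoint from all $\eta_m$. $\mathcal{FL}_{\mathrm{T}}$ is the set of tetrahedra of flags modulo the diagonal action of $\mathrm{PGL}(4)$, with the quotient topology. $(\mathrm{E})\mathrm{F}$ is the set of edge-faces $\sigma=(ij)k$, identified with even permutations $[ijkl]$ of $\{1,2,3,4\}$; $\sigma_+=(ki)j$, $\sigma_-=(jk)i$, $\bar\sigma=(ji)l$, $\mathrm{op}\,\sigma=(lk)j$. Triple ratio $t_\sigma=\frac{\bar\eta_i(\bar V_j)\bar\eta_j(\bar V_k)\bar\eta_k(\bar V_i)}{\bar\eta_i(\bar V_k)\bar\eta_j(\bar V_i)\bar\eta_k(\bar V_j)}$, edge ratio $e_\sigma=e_{ij}=\frac{\bar\eta_i(\bar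 V_k)\bar\eta_j(\bar V_l)}{\bar\eta_i(\bar V_l)\bar\eta_j(\bar V_k)}$. $\mathcal{D}^+_{\mathrm{T}}$ is the set of pairs $(t_\ast,e_\ast)$ of functions $(\mathrm{E})\mathrm{F}\to\mathbb{R}_{>0}$ satisfying, for all $\sigma$: $t_\sigma=t_{\sigma_+}=t_{\sigma_-}$, $e_\sigma=e_{\bar\sigma}$, $t_\sigma e_\sigma e_{\sigma_+}e_{\sigma_-}=1$, and $t_\sigma=e_{\mathrm{op}\sigma}e_{\mathrm{op}(\sigma_+)}e_{\mathrm{op}(\sigma_-)}$; it carries the subspace topology of $\mathbb{R}^{24}$. *)

(* Defs.v *)
From Stdlib Require Import Reals Lra Lia Bool Arith.
Open Scope R_scope.

Inductive I4 : Type := i1 | i2 | i3 | i4.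
Definition I4_nat (a : I4) : nat :=
  match a with i1 => 1 | i2 => 2 | i3 => 3 | i4 => 4 end%nat.
Definition delta4 (a b : I4) : R := if Nat.eqb (I4_nat a) (I4_nat b) then 1 else 0.

Definition vec4 := I4 -> R.
Definition sum4 (g : I4 -> R) : R := g i1 + g i2 + g i3 + g i4.
(* pairing of a covector (plane) with a vector (point) *)
Definition dot (f v : vec4) : R := sum4 (fun k => f k * v k).
Definition nonzero4 (v : vec4) : Prop := exists k, v k <> 0.

Definition gtb (a b : I4) : nat := if Nat.ltb (I4_nat b) (I4_nat a) then 1%nat else 0%nat.
Definition neqb (a b : I4) : bool := negb (Nat.eqb (I4_nat a) (I4_nat b)).
Definition even_perm4 (q : I4 * I4 * I4 * I4) : bool :=
  let '(a, b, c, d) := q in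
  neqb a b && neqb a c && neqb a d && neqb b c && neqb b d && neqb c d &&
  Nat.even (gtb a b + gtb a c + gtb a d + gtb b c + gtb b d + gtb c d)%nat.

(* sigma = (ij)k is identified with the even permutation [ijkl] *)
Definition EF := { q : I4 * I4 * I4 * I4 | even_perm4 q = true }.

Definition qplus (q : I4 * I4 * I4 * I4) := let '(i, j, k, l) := q in (k, i, j, l).
Definition qminus (q : I4 * I4 * I4 * I4) := let '(i, j, k, l) := q in (j, k, i, l).
Definition qbar (q : I4 * I4 * I4 * I4) := let '(i, j, k, l) := q in (j, i, l, k).
Definition qop (q : I4 * I4 * I4 * I4) := let '(i, j, k, l) := q in (l, k, j, i).

Ltac ev_cases q := destruct q as [[[a b] c] d]; destruct a, b, c, d; simpl;
  intro H; try discriminate; reflexivity.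
Lemma qplus_ok q : even_perm4 q = true -> even_perm4 (qplus q) = true.
Proof. ev_cases q. Qed.
Lemma qminus_ok q : even_perm4 q = true -> even_perm4 (qminus q) = true.
Proof. ev_cases q. Qed.
Lemma qbar_ok q : even_perm4 q = true -> even_perm4 (qbar q) = true.
Proof. ev_cases q. Qed.
Lemma qop_ok q : even_perm4 q = true -> even_perm4 (qop q) = true.
Proof. ev_cases q. Qed.

Definition ef_plus (s : EF) : EF := exist _ (qplus (proj1_sig s)) (qplus_ok _ (proj2_sig s)).
Definition ef_minus (s : EF) : EF := exist _ (qminus (proj1_sig s)) (qminus_ok _ (proj2_sig s)).
Definition ef_bar (s : EF) : EF := exist _ (qbar (proj1_sig s)) (qbar_ok _ (proj2_sig s)).
Definition ef_op (s : EF) : EF := exist _ (qop (proj1_sig s)) (qop_ok _ (proj2_sig s)).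

Definition s12 : EF := exist _ (i1, i2, i3, i4) eq_refl.
Definition s13 : EF := exist _ (i1, i3, i4, i2) eq_refl.
Definition s23 : EF := exist _ (i2, i3, i1, i4) eq_refl.
Definition s14 : EF := exist _ (i1, i4, i2, i3) eq_refl.
Definition s24 : EF := exist _ (i2, i4, i3, i1) eq_refl.

Definition continuous {X Y : Type} (oX : (X -> Prop) -> Prop) (oY : (Y -> Prop) -> Prop)
  (f : X -> Y) : Prop :=
  forall V, oY V -> oX (fun x => V (f x)).

Definition homeomorphism {X Y : Type} (oX : (X -> Prop) -> Prop) (oY : (Y -> Prop) -> Prop)
  (f : X -> Y) : Prop :=
  exists g : Y -> X, (forall x, g (f x) = x) /\ (forall y, f (g y) = y) /\
    continuous oX oY f /\ continuous oY oX g.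

(* topology on X induced by finitely many real coordinates c i (product topology
   of R^C when the coordinates identify X with R^C, C finite) *)
Definition coord_open {X C : Type} (c : C -> X -> R) (U : X -> Prop) : Prop :=
  forall x, U x -> exists eps, 0 < eps /\
    forall y, (forall i, Rabs (c i y - c i x) < eps) -> U y.

Definition sub_open {X : Type} (oX : (X -> Prop) -> Prop) (S : X -> Prop)
  (V : {x | S x} -> Prop) : Prop :=
  exists U, oX U /\ forall z, V z <-> U (proj1_sig z).

Definition quot {L : Type} (rel : L -> L -> Prop) : Type :=
  { C : L -> Prop | exists x, C = rel x }.
Definition cls {L : Type} (rel : L -> L -> Prop) (x : L) : quot rel :=
  exist _ (rel x) (ex_intro _ x eq_refl).
Definition quot_open {L : Type} (oL : (L -> Prop) -> Prop) (rel : L -> L -> Prop)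
  (W : quot rel -> Prop) : Prop :=
  oL (fun x => W (cls rel x)).

(** * Tuples of lifted flags: V m (point) and Eta m (plane), m = 1..4 *)
Definition config := ((I4 -> vec4) * (I4 -> vec4))%type.

Definition config_coord (ix : bool * I4 * I4) (x : config) : R :=
  let '(b, m, k) := ix in if b then fst x m k else snd x m k.
Definition config_open := coord_open config_coord.

Definition is_tetra (x : config) : Prop :=
  let V := fst x in let Eta := snd x in
  (* flags in RP^3: nonzero lifts, V m lies on Eta m *)
  (forall m, nonzero4 (V m) /\ nonzero4 (Eta m) /\ dot (Eta m) (V m) = 0) /\
  (forall i j, dot (Eta i) (V j) = 0 <-> i = j) /\
  (* V_1..V_4 not coplanar: the lifts are linearly independent *)
  (forall c : I4 -> R, (forall k, sum4 (fun j => c j * V j k) = 0) -> forall j, c j = 0) /\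
  (* some projective tetrahedron with vertices V_1..V_4 (given by a choice of signs
     of the lifts) has interior {[sum lam_j sg_j V_j] : lam_j > 0} disjoint from all Eta_m *)
  (exists sg : I4 -> R, (forall j, sg j = 1 \/ sg j = -1) /\
     forall m (lam : I4 -> R), (forall j, 0 < lam j) ->
       dot (Eta m) (fun k => sum4 (fun j => lam j * sg j * V j k)) <> 0).

Definition Ltet := { x : config | is_tetra x }.
Definition Ltet_open := sub_open config_open is_tetra.

(* PGL(4) diagonal action together with rescaling of the lifts *)
Definition mat_inverse (M N : I4 -> I4 -> R) : Prop :=
  (forall i k, sum4 (fun j => M i j * N j k) = delta4 i k) /\
  (forall i k, sum4 (fun j => N i j * M j k) = delta4 i k).
Definition flag_equiv (x y : config) : Prop :=
  exists (M N : I4 -> I4 -> R), mat_inverse M N /\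
  exists (a b : I4 -> R), (forall m, a m <> 0 /\ b m <> 0) /\
  forall m k,
    fst y m k = a m * sum4 (fun j => M k j * fst x m j) /\
    snd y m k = b m * sum4 (fun j => snd x m j * N j k).

Definition relL (p q : Ltet) : Prop := flag_equiv (proj1_sig p) (proj1_sig q).
Definition FLT := quot relL.
Definition FLT_open := quot_open Ltet_open relL.

Definition evl (x : config) (i j : I4) : R := dot (snd x i) (fst x j).

Definition tri_ratio (x : config) (s : EF) : R :=
  let '(i, j, k, l) := proj1_sig s in
  evl x i j * evl x j k * evl x k i / (evl x i k * evl x j i * evl x k j).
Definition edge_ratio (x : config) (s : EF) : R :=
  let '(i, j, k, l) := proj1_sig s in
  evl x i k * evl x j l / (evl x i l * evl x j k).
Definition ratios (x : config) : (EF -> R) * (EF -> R) := (tri_ratio x, edge_ratio x).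

Definition dpair := ((EF -> R) * (EF -> R))%type.
Definition dpair_coord (ix : bool * EF) (p : dpair) : R :=
  let '(b, s) := ix in if b then fst p s else snd p s.
Definition dpair_open := coord_open dpair_coord.

Definition in_DT (p : dpair) : Prop :=
  let t := fst p in let e := snd p in
  (forall s, 0 < t s) /\ (forall s, 0 < e s) /\
  forall s,
    t s = t (ef_plus s) /\ t s = t (ef_minus s) /\
    e s = e (ef_bar s) /\
    t s * e s * e (ef_plus s) * e (ef_minus s) = 1 /\
    t s = e (ef_op s) * e (ef_op (ef_plus s)) * e (ef_op (ef_minus s)).

Definition DT := { p : dpair | in_DT p }.
Definition DT_open := sub_open dpair_open in_DT.

Inductive I5 : Type := c1 | c2 | c3 | c4 | c5.
Definition R5 := I5 -> R.
Definition R5_open := coord_open (fun (i : I5) (y : R5) => y i).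
Definition pos5 (y : R5) : Prop := forall i, 0 < y i.
Definition P5 := { y : R5 | pos5 y }.
Definition P5_open := sub_open R5_open pos5.

Definition edge5 (p : dpair) : R5 := fun i =>
  match i with
  | c1 => snd p s12 | c2 => snd p s13 | c3 => snd p s23 | c4 => snd p s14 | c5 => snd p s24
  end.

(* Main.v *)
Require Import Defs.
From Stdlib Require Import Reals.
From Stdlib Require Import Reals Lra Lia List Eqdep_dec FunctionalExtensionality ProofIrrelevance
  PropExtensionality ClassicalEpsilon.
From mathcomp Require all_boot all_algebra Rstruct.
Require Import Defs.
Import ListNotations.
Open Scope R_scope.

Lemma I4_dec (a b : I4) : {a = b} + {a <> b}.
Proof. decide equality. Defined.

Lemma UIP_bool (b c : bool) (p q : b = c) : p = q.
Proof. apply UIP_dec, Bool.bool_dec. Qed.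

Lemma EF_eq (s s' : EF) : proj1_sig s = proj1_sig s' -> s = s'.
Proof. destruct s as [q H], s' as [q' H']; simpl; intros ->. f_equal. apply UIP_bool. Qed.

Ltac fixEF := repeat match goal with
  | |- context [exist (fun z => even_perm4 z = true) ?q ?P] =>
      lazymatch P with @eq_refl _ _ => fail | _ =>
        rewrite (UIP_bool _ _ P eq_refl) end
  | H : context [exist (fun z => even_perm4 z = true) ?q ?P] |- _ =>
      lazymatch P with @eq_refl _ _ => fail | _ =>
        rewrite (UIP_bool _ _ P eq_refl) in H end
  end.

Ltac EFcases s := let q := fresh "q" in let H := fresh "H" in
  destruct s as [q H]; destruct q as [[[[] []] []] []]; try discriminate H;
  rewrite (UIP_bool _ _ H eq_refl); clear H.

Lemma test (E : EF -> R) : forall s, E (ef_bar s) = E (ef_bar s).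
Proof. intro s. EFcases s; simpl; fixEF; reflexivity. Qed.

Lemma sum4_ext f g : (forall q, f q = g q) -> sum4 f = sum4 g.
Proof. intros H; unfold sum4; rewrite !H; reflexivity. Qed.
Lemma sum4_dl k (x : I4 -> R) : sum4 (fun l => delta4 k l * x l) = x k.
Proof. destruct k; unfold sum4, delta4; simpl; ring. Qed.
Lemma sum4_dr k (x : I4 -> R) : sum4 (fun l => x l * delta4 l k) = x k.
Proof. destruct k; unfold sum4, delta4; simpl; ring. Qed.

Lemma flag_refl x : flag_equiv x x.
Proof.
  exists delta4, delta4; split.
  - split; intros i k; rewrite sum4_dl; reflexivity.
  - exists (fun _ => 1), (fun _ => 1); split.
    + intros; split; lra.
    + intros m k; rewrite sum4_dl, sum4_dr; split; ring.
Qed.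

Lemma flag_sym x y : flag_equiv x y -> flag_equiv y x.
Proof.
  intros (M & N & [HMN HNM] & a & b & Hab & H).
  exists N, M; split; [split; assumption|].
  exists (fun m => / a m), (fun m => / b m); split.
  - intros m; destruct (Hab m); split; apply Rinv_neq_0_compat; assumption.
  - intros m k; destruct (Hab m) as [Ha Hb]; split.
    + rewrite (sum4_ext _ (fun j => N k j * (a m * sum4 (fun l => M j l * fst x m l))))
        by (intro j; rewrite (proj1 (H m j)); reflexivity).
      replace (sum4 (fun j => N k j * (a m * sum4 (fun l => M j l * fst x m l))))
        with (a m * sum4 (fun l => sum4 (fun j => N k j * M j l) * fst x m l))
        by (unfold sum4; ring).
      rewrite (sum4_ext _ (fun l => delta4 k l * fst x m l)) by (intro l; rewrite HNM; reflexivity).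
      rewrite sum4_dl. field; assumption.
    + rewrite (sum4_ext _ (fun j => (b m * sum4 (fun l => snd x m l * N l j)) * M j k))
        by (intro j; rewrite (proj2 (H m j)); reflexivity).
      replace (sum4 (fun j => (b m * sum4 (fun l => snd x m l * N l j)) * M j k))
        with (b m * sum4 (fun l => snd x m l * sum4 (fun j => N l j * M j k)))
        by (unfold sum4; ring).
      rewrite (sum4_ext _ (fun l => snd x m l * delta4 l k)) by (intro l; rewrite HNM; reflexivity).
      rewrite sum4_dr. field; assumption.
Qed.

Lemma flag_trans x y z : flag_equiv x y -> flag_equiv y z -> flag_equiv x z.
Proof.
  intros (M & N & [HMN HNM] & a & b & Hab & H) (M' & N' & [HMN' HNM'] & a' & b' & Hab' & H').
  exists (fun k l => sum4 (fun j => M' k j * M j l)), (fun l k => sum4 (fun j => N l j * N' j k)).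
  split; [split|].
  - intros i k.
    replace (sum4 (fun j => sum4 (fun p => M' i p * M p j) * sum4 (fun q => N j q * N' q k)))
      with (sum4 (fun p => M' i p * sum4 (fun q => sum4 (fun j => M p j * N j q) * N' q k)))
      by (unfold sum4; ring).
    rewrite (sum4_ext _ (fun p => M' i p * N' p k)); [apply HMN'|].
    intro p. rewrite (sum4_ext _ (fun q => delta4 p q * N' q k)) by (intro q; rewrite HMN; reflexivity).
    rewrite sum4_dl; reflexivity.
  - intros i k.
    replace (sum4 (fun j => sum4 (fun p => N i p * N' p j) * sum4 (fun q => M' j q * M q k)))
      with (sum4 (fun p => N i p * sum4 (fun q => sum4 (fun j => N' p j * M' j q) * M q k)))
      by (unfold sum4; ring).
    rewrite (sum4_ext _ (fun p => N i p * M p k)); [apply HNM|].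
    intro p. rewrite (sum4_ext _ (fun q => delta4 p q * M q k)) by (intro q; rewrite HNM'; reflexivity).
    rewrite sum4_dl; reflexivity.
  - exists (fun m => a' m * a m), (fun m => b' m * b m); split.
    + intro m; destruct (Hab m), (Hab' m); split; apply Rmult_integral_contrapositive_currified; assumption.
    + intros m k; split.
      * rewrite (proj1 (H' m k)).
        rewrite (sum4_ext _ (fun j => M' k j * (a m * sum4 (fun l => M j l * fst x m l))))
          by (intro j; rewrite (proj1 (H m j)); reflexivity).
        unfold sum4; ring.
      * rewrite (proj2 (H' m k)).
        rewrite (sum4_ext _ (fun j => (b m * sum4 (fun l => snd x m l * N l j)) * N' j k))
          by (intro j; rewrite (proj2 (H m j)); reflexivity).
        unfold sum4; ring.
Qed.

Lemma evl_equiv x y : flag_equiv x y ->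
  exists a b : I4 -> R, (forall m, a m <> 0 /\ b m <> 0) /\
    forall i j, evl y i j = b i * a j * evl x i j.
Proof.
  intros (M & N & [HMN HNM] & a & b & Hab & H).
  exists a, b; split; [assumption|].
  intros i j; unfold evl, dot.
  rewrite (sum4_ext _ (fun k => (b i * sum4 (fun l => snd x i l * N l k)) *
                                (a j * sum4 (fun p => M k p * fst x j p))))
    by (intro k; rewrite (proj2 (H i k)), (proj1 (H j k)); reflexivity).
  replace (sum4 (fun k => (b i * sum4 (fun l => snd x i l * N l k)) *
                                (a j * sum4 (fun p => M k p * fst x j p))))
    with (b i * a j * sum4 (fun l => snd x i l * sum4 (fun p => sum4 (fun k => N l k * M k p) * fst x j p)))
    by (unfold sum4; ring).
  f_equal. apply sum4_ext; intro l. f_equal.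
  rewrite (sum4_ext _ (fun p => delta4 l p * fst x j p)) by (intro p; rewrite HNM; reflexivity).
  apply sum4_dl.
Qed.


Lemma tetra_nz x : is_tetra x -> forall i j, i <> j -> evl x i j <> 0.
Proof. intros (_ & Hnd & _) i j Hij E. apply Hij, Hnd, E. Qed.

Lemma tetra_diag x : is_tetra x -> forall i, evl x i i = 0.
Proof. intros (Hf & _) i. apply (Hf i). Qed.

Definition lamf (j k : I4) (Lj Lk : R) (q : I4) : R :=
  if I4_dec q j then Lj else if I4_dec q k then Lk else 1.

Lemma lamf_sum j k Lj Lk (c : I4 -> R) : j <> k ->
  sum4 (fun q => lamf j k Lj Lk q * c q) = sum4 c - c j - c k + Lj * c j + Lk * c k.
Proof.
  intros Hjk; destruct j, k; try congruence; unfold sum4, lamf; simpl; ring.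
Qed.

Lemma same_sign x : is_tetra x -> exists sg : I4 -> R, (forall j, sg j = 1 \/ sg j = -1) /\
  forall m j k, j <> m -> k <> m -> 0 < (sg j * evl x m j) * (sg k * evl x m k).
Proof.
  intros Ht. pose proof Ht as (Hf & Hnd & Hli & sg & Hsg & Hint).
  exists sg; split; [assumption|].
  intros m j k Hjm Hkm.
  set (c := fun q => sg q * evl x m q).
  assert (Hc : forall q, q <> m -> c q <> 0).
  { intros q Hq; unfold c. apply Rmult_integral_contrapositive_currified.
    destruct (Hsg q) as [-> | ->]; lra. apply tetra_nz; auto. }
  assert (Hcm : c m = 0) by (unfold c; rewrite tetra_diag; auto; ring).
  change (0 < c j * c k).
  destruct (I4_dec j k) as [<- | Hjk].
  { pose proof (Hc j Hjm). nra. }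
  destruct (Rlt_or_le 0 (c j * c k)) as [Hp|Hn]; [assumption|exfalso].
  assert (Hneg : c j * c k < 0).
  { destruct (Rle_lt_or_eq_dec _ _ Hn); auto. exfalso; apply Rmult_integral in e.
    destruct e; [apply (Hc j)|apply (Hc k)]; auto. }
  set (R0 := sum4 c - c j - c k).
  pose proof (Hc j Hjm) as Hcj. pose proof (Hc k Hkm) as Hck.
  set (Lj := (Rabs R0 + 1) / Rabs (c j)).
  assert (HLj : 0 < Lj).
  { unfold Lj. apply Rdiv_lt_0_compat. pose proof (Rabs_pos R0); lra. apply Rabs_pos_lt; auto. }
  assert (HLjc : Lj * c j = Rabs R0 + 1 \/ Lj * c j = - (Rabs R0 + 1)).
  { unfold Lj. destruct (Rle_or_lt 0 (c j)).
    - left. rewrite (Rabs_right (c j)) by lra. field. auto.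
    - right. rewrite (Rabs_left (c j)) by lra. field. auto. }
  set (Lk := (Lj * c j + R0) / (- c k)).
  assert (HLk : 0 < Lk).
  { unfold Lk. pose proof (Rle_abs R0). pose proof (Rle_abs (-R0)). rewrite Rabs_Ropp in *.
    destruct HLjc as [E|E]; rewrite E.
    - assert (0 < c j).
      { destruct (Rle_or_lt (c j) 0) as [Hle|]; [|auto].
        assert (0 <= Lj * (- c j)) by (apply Rmult_le_pos; lra). lra. }
      assert (c k < 0) by nra.
      apply Rdiv_lt_0_compat; lra.
    - assert (c j < 0).
      { destruct (Rle_or_lt 0 (c j)) as [Hle|]; [|auto].
        assert (0 <= Lj * c j) by (apply Rmult_le_pos; lra). lra. }
      assert (0 < c k) by nra.
      replace ((- (Rabs R0 + 1) + R0) / - c k) with ((Rabs R0 + 1 - R0) / c k) by (field; auto).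
      apply Rdiv_lt_0_compat; lra. }
  apply (Hint m (lamf j k Lj Lk)).
  - intro q; unfold lamf; destruct (I4_dec q j); [auto|destruct (I4_dec q k); [auto|lra]].
  - replace (dot (snd x m) (fun k0 => sum4 (fun j0 => lamf j k Lj Lk j0 * sg j0 * fst x j0 k0)))
      with (sum4 (fun q => lamf j k Lj Lk q * c q))
      by (unfold c, evl, dot, sum4; ring).
    rewrite lamf_sum by auto. fold R0. unfold Lk. field. auto.
Qed.

Lemma tri_pos_R aij ajk aki aik aji akj si sj sk :
  (si = 1 \/ si = -1) -> (sj = 1 \/ sj = -1) -> (sk = 1 \/ sk = -1) ->
  0 < (sj*aij)*(sk*aik) -> 0 < (sk*ajk)*(si*aji) -> 0 < (si*aki)*(sj*akj) ->
  0 < aij*ajk*aki/(aik*aji*akj).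
Proof.
  intros Hi Hj Hk P1 P2 P3.
  assert (aik <> 0) by (intro E; rewrite E in P1; lra).
  assert (aji <> 0) by (intro E; rewrite E in P2; lra).
  assert (akj <> 0) by (intro E; rewrite E in P3; lra).
  assert (D : 0 < ((aik*aji*akj)*(aik*aji*akj))).
  { apply (Rsqr_pos_lt _). repeat apply Rmult_integral_contrapositive_currified; auto. }
  replace (aij*ajk*aki/(aik*aji*akj)) with
    ((sj*aij)*(sk*aik)*((sk*ajk)*(si*aji))*((si*aki)*(sj*akj)) / ((aik*aji*akj)*(aik*aji*akj))).
  - apply Rdiv_lt_0_compat; [|auto]. apply Rmult_lt_0_compat; [apply Rmult_lt_0_compat|]; auto.
  - destruct Hi as [-> | ->], Hj as [-> | ->], Hk as [-> | ->]; field; auto.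
Qed.

Lemma edge_pos_R aik ajl ail ajk sk sl :
  (sk = 1 \/ sk = -1) -> (sl = 1 \/ sl = -1) ->
  0 < (sk*aik)*(sl*ail) -> 0 < (sl*ajl)*(sk*ajk) ->
  0 < aik*ajl/(ail*ajk).
Proof.
  intros Hk Hl P1 P2.
  assert (ail <> 0) by (intro E; rewrite E in P1; lra).
  assert (ajk <> 0) by (intro E; rewrite E in P2; lra).
  assert (D : 0 < ((ail*ajk)*(ail*ajk))).
  { apply (Rsqr_pos_lt _). repeat apply Rmult_integral_contrapositive_currified; auto. }
  replace (aik*ajl/(ail*ajk)) with ((sk*aik)*(sl*ail)*((sl*ajl)*(sk*ajk)) / ((ail*ajk)*(ail*ajk))).
  - apply Rdiv_lt_0_compat; [|auto]. apply Rmult_lt_0_compat; auto.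
  - destruct Hk as [-> | ->], Hl as [-> | ->]; field; auto.
Qed.

Lemma ratios_DT x : is_tetra x -> in_DT (ratios x).
Proof.
  intros Ht. destruct (same_sign x Ht) as (sg & Hsg & Hss).
  pose proof (tetra_nz x Ht) as Hnz.
  unfold in_DT, ratios; simpl; split; [|split].
  - intro s; EFcases s; simpl; unfold tri_ratio; simpl;
      (eapply tri_pos_R; [..| apply Hss; discriminate | apply Hss; discriminate | apply Hss; discriminate]);
      apply Hsg.
  - intro s; EFcases s; simpl; unfold edge_ratio; simpl;
      (eapply edge_pos_R; [..| apply Hss; discriminate | apply Hss; discriminate]);
      apply Hsg.
  - intro s; EFcases s; simpl; fixEF; unfold tri_ratio, edge_ratio; simpl;
      repeat split; field; repeat split; apply Hnz; discriminate.
Qed.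


Definition etaf (y : R5) (m k : I4) : R :=
  match m, k with
  | i1, i1 => 0 | i1, _ => 1
  | i2, i1 => 1 | i2, i2 => 0 | i2, i3 => 1 | i2, i4 => y c1
  | i3, i1 => 1 | i3, i2 => y c1 * y c2 * y c3 | i3, i3 => 0 | i3, i4 => y c1 * y c3
  | i4, i1 => 1 | i4, i2 => / (y c4 * y c5) | i4, i3 => / y c5 | i4, i4 => 0
  end.
Definition conf5 (y : R5) : config := (fun m k => delta4 m k, fun m k => etaf y m k).

Lemma evl_conf5 y i j : evl (conf5 y) i j = etaf y i j.
Proof. destruct i, j; unfold evl, dot, sum4; simpl; unfold delta4; simpl; ring. Qed.

Lemma etaf_pos y : pos5 y -> forall i j, i <> j -> 0 < etaf y i j.
Proof.
  intros Hy i j Hij. pose proof (Hy c1). pose proof (Hy c2). pose proof (Hy c3).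
  pose proof (Hy c4). pose proof (Hy c5).
  destruct i, j; simpl; try congruence; try lra;
  repeat (apply Rmult_lt_0_compat || apply Rinv_0_lt_compat); auto.
Qed.

Lemma conf5_tetra y : pos5 y -> is_tetra (conf5 y).
Proof.
  intros Hy. pose proof (etaf_pos y Hy) as Hp.
  split; [|split; [|split]].
  - intro m; split; [|split].
    + exists m; destruct m; simpl; unfold delta4; simpl; intro; lra.
    + destruct m; [exists i2|exists i1|exists i1|exists i1]; simpl; intro; lra.
    + change (evl (conf5 y) m m = 0); rewrite evl_conf5; destruct m; reflexivity.
  - intros i j; change (evl (conf5 y) i j = 0 <-> i = j); rewrite evl_conf5; split.
    + intro E; destruct (I4_dec i j) as [|n]; auto. pose proof (Hp i j n); lra.
    + intros ->; destruct j; reflexivity.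
  - intros c Hc j. specialize (Hc j). 
    change (sum4 (fun l => c l * delta4 l j) = 0) in Hc.
    rewrite sum4_dr in Hc; exact Hc.
  - exists (fun _ => 1); split; [intro; left; reflexivity|].
    intros m lam Hlam.
    replace (dot (snd (conf5 y) m) (fun k => sum4 (fun j => lam j * 1 * fst (conf5 y) j k)))
      with (sum4 (fun j => lam j * etaf y m j))
      by (destruct m; unfold dot, sum4; simpl; unfold delta4; simpl; ring).
    apply Rgt_not_eq.
    pose proof (Hlam i1); pose proof (Hlam i2); pose proof (Hlam i3); pose proof (Hlam i4).
    assert (forall j, j <> m -> 0 < lam j * etaf y m j) as Q
      by (intros j Hj; apply Rmult_lt_0_compat; auto).
    destruct m; unfold sum4; simpl etaf at 1;
    [pose proof (Q i2 ltac:(discriminate)); pose proof (Q i3 ltac:(discriminate)); pose proof (Q i4 ltac:(discriminate))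
    |pose proof (Q i1 ltac:(discriminate)); pose proof (Q i3 ltac:(discriminate)); pose proof (Q i4 ltac:(discriminate))
    |pose proof (Q i1 ltac:(discriminate)); pose proof (Q i2 ltac:(discriminate)); pose proof (Q i4 ltac:(discriminate))
    |pose proof (Q i1 ltac:(discriminate)); pose proof (Q i2 ltac:(discriminate)); pose proof (Q i3 ltac:(discriminate))];
    simpl etaf in *; lra.
Qed.

Lemma edge5_conf5 y : pos5 y -> edge5 (ratios (conf5 y)) = y.
Proof.
  intros Hy. pose proof (Hy c1). pose proof (Hy c2). pose proof (Hy c3).
  pose proof (Hy c4). pose proof (Hy c5).
  apply functional_extensionality; intro i; destruct i; simpl;
  unfold edge_ratio; simpl; rewrite !evl_conf5; simpl; field; repeat split; lra.
Qed.


Notation mkEF q := (exist (fun z => even_perm4 z = true) q eq_refl).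

Lemma Ebar p (Hp : in_DT p) q H q' H' : qbar q = q' ->
  snd p (exist _ q H) = snd p (exist _ q' H').
Proof.
  intro E. destruct (proj2 (proj2 Hp) (exist _ q H)) as (_ & _ & Hb & _).
  rewrite Hb. f_equal. apply EF_eq. simpl. exact E.
Qed.

Lemma Tform p (Hp : in_DT p) s :
  fst p s = / (snd p s * snd p (ef_plus s) * snd p (ef_minus s)).
Proof.
  destruct Hp as (Ht & He & Hr). destruct (Hr s) as (_ & _ & _ & H4 & _).
  pose proof (He s); pose proof (He (ef_plus s)); pose proof (He (ef_minus s)).
  assert (D : snd p s * snd p (ef_plus s) * snd p (ef_minus s) <> 0).
  { apply Rgt_not_eq. repeat apply Rmult_lt_0_compat; auto. }
  transitivity (fst p s * (snd p s * snd p (ef_plus s) * snd p (ef_minus s)) *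
     / (snd p s * snd p (ef_plus s) * snd p (ef_minus s))); [field; repeat split; lra|].
  replace (fst p s * (snd p s * snd p (ef_plus s) * snd p (ef_minus s))) with 1
    by (rewrite <- H4; ring). ring.
Qed.

Lemma E34 p (Hp : in_DT p) :
  snd p (mkEF (i4,i3,i2,i1)) = / (snd p (mkEF (i1,i2,i3,i4)) * snd p (mkEF (i3,i1,i2,i4)) *
     snd p (mkEF (i2,i3,i1,i4)) * snd p (mkEF (i4,i2,i1,i3)) * snd p (mkEF (i4,i1,i3,i2))).
Proof.
  pose proof (Tform p Hp (mkEF (i1,i2,i3,i4))) as HT.
  destruct Hp as (Ht & He & Hr). destruct (Hr (mkEF (i1,i2,i3,i4))) as (_ & _ & _ & _ & H5).
  unfold ef_plus, ef_minus, ef_op in HT, H5; simpl in HT, H5; fixEF.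
  rewrite HT in H5.
  pose proof (He (mkEF (i4,i2,i1,i3))); pose proof (He (mkEF (i4,i1,i3,i2))).
  pose proof (He (mkEF (i1,i2,i3,i4))); pose proof (He (mkEF (i3,i1,i2,i4))); pose proof (He (mkEF (i2,i3,i1,i4))).
  pose proof (He (mkEF (i4,i3,i2,i1))).
  set (a := snd p (mkEF (i4,i3,i2,i1))) in *.
  set (b := snd p (mkEF (i4,i2,i1,i3))) in *.
  set (c := snd p (mkEF (i4,i1,i3,i2))) in *.
  set (d := snd p (mkEF (i1,i2,i3,i4))) in *.
  set (e := snd p (mkEF (i3,i1,i2,i4))) in *.
  set (f := snd p (mkEF (i2,i3,i1,i4))) in *.
  assert (Hk : a * b * c = / (d * e * f)) by (symmetry; exact H5).
  transitivity (a * b * c / (b * c)); [field; split; lra|].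
  rewrite Hk. field. repeat split; lra.
Qed.

Lemma DT_det p q : in_DT p -> in_DT q -> edge5 p = edge5 q -> p = q.
Proof.
  intros Hp Hq He.
  assert (E1 : snd p s12 = snd q s12) by exact (f_equal (fun f => f c1) He).
  assert (E2 : snd p s13 = snd q s13) by exact (f_equal (fun f => f c2) He).
  assert (E3 : snd p s23 = snd q s23) by exact (f_equal (fun f => f c3) He).
  assert (E4 : snd p s14 = snd q s14) by exact (f_equal (fun f => f c4) He).
  assert (E5 : snd p s24 = snd q s24) by exact (f_equal (fun f => f c5) He).
  unfold s12, s13, s23, s14, s24 in *.
  assert (HB : forall q0, qbar q0 = q0 -> True) by auto.
  assert (E6 : snd p (mkEF (i2,i1,i4,i3)) = snd q (mkEF (i2,i1,i4,i3))).
  { rewrite <- (Ebar p Hp (i1,i2,i3,i4) eq_refl), <- (Ebar q Hq (i1,i2,i3,i4) eq_refl); auto. }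
  assert (E7 : snd p (mkEF (i3,i1,i2,i4)) = snd q (mkEF (i3,i1,i2,i4))).
  { rewrite <- (Ebar p Hp (i1,i3,i4,i2) eq_refl), <- (Ebar q Hq (i1,i3,i4,i2) eq_refl); auto. }
  assert (E8 : snd p (mkEF (i3,i2,i4,i1)) = snd q (mkEF (i3,i2,i4,i1))).
  { rewrite <- (Ebar p Hp (i2,i3,i1,i4) eq_refl), <- (Ebar q Hq (i2,i3,i1,i4) eq_refl); auto. }
  assert (E9 : snd p (mkEF (i4,i1,i3,i2)) = snd q (mkEF (i4,i1,i3,i2))).
  { rewrite <- (Ebar p Hp (i1,i4,i2,i3) eq_refl), <- (Ebar q Hq (i1,i4,i2,i3) eq_refl); auto. }
  assert (E10 : snd p (mkEF (i4,i2,i1,i3)) = snd q (mkEF (i4,i2,i1,i3))).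
  { rewrite <- (Ebar p Hp (i2,i4,i3,i1) eq_refl), <- (Ebar q Hq (i2,i4,i3,i1) eq_refl); auto. }
  assert (E11 : snd p (mkEF (i4,i3,i2,i1)) = snd q (mkEF (i4,i3,i2,i1))).
  { rewrite (E34 p Hp), (E34 q Hq). rewrite E1, E7, E3, E10, E9. reflexivity. }
  assert (E12 : snd p (mkEF (i3,i4,i1,i2)) = snd q (mkEF (i3,i4,i1,i2))).
  { rewrite (Ebar p Hp (i3,i4,i1,i2) eq_refl (i4,i3,i2,i1) eq_refl),
            (Ebar q Hq (i3,i4,i1,i2) eq_refl (i4,i3,i2,i1) eq_refl); auto. }
  assert (HE : snd p = snd q).
  { apply functional_extensionality; intro s. EFcases s; assumption. }
  destruct p as [tp ep], q as [tq eq]; simpl in *. subst eq. f_equal.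
  apply functional_extensionality; intro s.
  pose proof (Tform _ Hp s) as T1; pose proof (Tform _ Hq s) as T2; simpl in T1, T2.
  rewrite T1, T2; reflexivity.
Qed.

Module LA.
Import all_boot all_algebra Rstruct.
Import GRing.Theory.

Definition ofo (i : 'I_4) : I4 :=
  match val i with 0 => i1 | 1 => i2 | 2 => i3 | _ => i4 end%nat.
Definition too (a : I4) : 'I_4 :=
  match a with i1 => @Ordinal 4 0 isT | i2 => @Ordinal 4 1 isT | i3 => @Ordinal 4 2 isT | i4 => @Ordinal 4 3 isT end.
Lemma ofoK a : ofo (too a) = a. Proof. by case: a. Qed.
Lemma tooK i : too (ofo i) = i.
Proof. apply: val_inj; case: i => [[|[|[|[|n]]]] Hn] //=. Qed.
Lemma sum4E (f : I4 -> R) : sum4 f = (\sum_(i < 4) f (ofo i))%R.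
Proof. rewrite !big_ord_recl big_ord0 /sum4 /=.
 by rewrite addr0 !addrA. Qed.

Lemma delta4E a b : delta4 a b = (GRing.natmul (1%R : R) (too a == too b)).
Proof. by case: a; case: b. Qed.

Definition inv_stmt (V : I4 -> vec4) :=
  (forall c : I4 -> R, (forall k, sum4 (fun j => c j * V j k) = 0) -> forall j, c j = 0) ->
  exists Q : I4 -> I4 -> R,
    (forall k m, sum4 (fun j => Q k j * V m j) = delta4 k m) /\
    (forall j l, sum4 (fun k => V k j * Q k l) = delta4 j l).
Local Open Scope ring_scope.
Lemma inv_exists V : inv_stmt V.
Proof.
rewrite /inv_stmt => Hind.
pose A : 'M[R]_4 := \matrix_(i, j) V (ofo i) (ofo j).
have HA : A \in unitmx.
  rewrite -row_free_unit -kermx_eq0; apply/eqP/matrixP => i j.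
  have := mulmx_ker A; move/matrixP => H.
  rewrite [RHS]mxE.
  have -> : j = too (ofo j) by rewrite tooK.
  apply: (Hind (fun a => kermx A i (too a)) _ (ofo j)).
  move=> k. rewrite sum4E.
  transitivity ((kermx A *m A) i (too k)); last by rewrite H mxE.
  rewrite mxE; apply: eq_bigr => l _. by rewrite [X in _ = _ * X]mxE tooK ofoK.
pose B := invmx A.
exists (fun k j => B (too j) (too k)); split.
- move=> k m. rewrite sum4E delta4E.
  have := mulmxV HA; move/matrixP => /(_ (too m) (too k)). rewrite !mxE => H.
  rewrite eq_sym -H. apply: eq_bigr => l _. by rewrite mxE tooK ofoK mulrC.
- move=> j l. rewrite sum4E delta4E.
  have := mulVmx HA; move/matrixP => /(_ (too l) (too j)). rewrite !mxE => H.
  rewrite eq_sym -H. apply: eq_bigr => k _. by rewrite mxE tooK ofoK mulrC.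
Qed.
End LA.


Lemma delta4_eq i : delta4 i i = 1. Proof. destruct i; reflexivity. Qed.
Lemma delta4_neq i k : i <> k -> delta4 i k = 0.
Proof. intro H; destruct i, k; try congruence; reflexivity. Qed.
Lemma delta4_sym i k : delta4 i k = delta4 k i.
Proof. destruct i, k; reflexivity. Qed.

Lemma normal_form x : is_tetra x -> flag_equiv x (conf5 (edge5 (ratios x))).
Proof.
  intros Ht. pose proof (tetra_nz x Ht) as Hnz. pose proof (tetra_diag x Ht) as Hd.
  destruct (LA.inv_exists (fst x) (proj1 (proj2 (proj2 Ht)))) as (Q & HQ1 & HQ2).
  set (a := evl x).
  set (cp := fun k => match k with
     | i1 => a i2 i3 / (a i2 i1 * a i1 i3) | i2 => / a i1 i2 | i3 => / a i1 i3 | i4 => / a i1 i4 end).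
  set (bb := fun m => match m with
     | i1 => 1 | i2 => / (a i2 i1 * cp i1) | i3 => / (a i3 i1 * cp i1) | i4 => / (a i4 i1 * cp i1) end).
  assert (Ha : forall i j, i <> j -> a i j <> 0) by exact Hnz.
  assert (Hcp : forall k, cp k <> 0).
  { intro k; destruct k; simpl; unfold Rdiv;
    repeat (apply Rmult_integral_contrapositive_currified || apply Rinv_neq_0_compat);
    apply Ha; discriminate. }
  assert (Hbb : forall m, bb m <> 0).
  { intro m; destruct m; simpl bb; [lra|..];
    repeat (apply Rmult_integral_contrapositive_currified || apply Rinv_neq_0_compat);
    try apply Hcp; apply Ha; discriminate. }
  exists (fun k j => Q k j / cp k), (fun j k => fst x k j * cp k); split; [split|].
  - intros i k.
    replace (sum4 (fun j => Q i j / cp i * (fst x k j * cp k)))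
      with (cp k / cp i * sum4 (fun j => Q i j * fst x k j)) by (unfold sum4; field; apply Hcp).
    rewrite HQ1. destruct (I4_dec i k) as [<-|n].
    + rewrite delta4_eq; field; apply Hcp.
    + rewrite delta4_neq by auto; ring.
  - intros i k.
    replace (sum4 (fun j => fst x j i * cp j * (Q j k / cp j)))
      with (sum4 (fun j => fst x j i * Q j k)) by (unfold sum4; field; repeat split; apply Hcp).
    apply HQ2.
  - exists cp, bb; split; [intro m; split; auto|].
    intros m k; split.
    + replace (cp m * sum4 (fun j => Q k j / cp k * fst x m j))
        with (cp m / cp k * sum4 (fun j => Q k j * fst x m j)) by (unfold sum4; field; apply Hcp).
      rewrite HQ1. simpl. destruct (I4_dec m k) as [<-|n].
      * rewrite delta4_eq; field; apply Hcp.
      * rewrite !delta4_neq by auto; ring.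
    + replace (bb m * sum4 (fun j => snd x m j * (fst x k j * cp k)))
        with (bb m * cp k * a m k) by (unfold a, evl, dot, sum4; ring).
      simpl snd. unfold edge5, ratios, edge_ratio; simpl; fold a.
      pose proof (Ha i1 i2 ltac:(discriminate)); pose proof (Ha i1 i3 ltac:(discriminate));
      pose proof (Ha i1 i4 ltac:(discriminate)); pose proof (Ha i2 i1 ltac:(discriminate));
      pose proof (Ha i2 i3 ltac:(discriminate)); pose proof (Ha i2 i4 ltac:(discriminate));
      pose proof (Ha i3 i1 ltac:(discriminate)); pose proof (Ha i3 i2 ltac:(discriminate));
      pose proof (Ha i3 i4 ltac:(discriminate)); pose proof (Ha i4 i1 ltac:(discriminate));
      pose proof (Ha i4 i2 ltac:(discriminate)); pose proof (Ha i4 i3 ltac:(discriminate)).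
      assert (a i1 i1 = 0) by apply Hd. assert (a i2 i2 = 0) by apply Hd.
      assert (a i3 i3 = 0) by apply Hd. assert (a i4 i4 = 0) by apply Hd.
      destruct m, k; unfold bb, cp; simpl;
        try (match goal with H : a ?i ?i = 0 |- context [a ?i ?i] => rewrite H end; ring);
        field; repeat split; auto.
Qed.


Definition ContAt {X C : Type} (c : C -> X -> R) (f : X -> R) (x : X) : Prop :=
  forall eps, 0 < eps -> exists del, 0 < del /\
    forall y, (forall i, Rabs (c i y - c i x) < del) -> Rabs (f y - f x) < eps.

Section Cont.
Context {X C : Type} (c : C -> X -> R).

Lemma ContAt_const r x : ContAt c (fun _ => r) x.
Proof. intros eps He; exists 1; split; [lra|]; intros; rewrite Rminus_diag, Rabs_R0; auto. Qed.

Lemma ContAt_coord i x : ContAt c (c i) x.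
Proof. intros eps He; exists eps; split; auto. Qed.

Lemma ContAt_ext f g x : (forall z, f z = g z) -> ContAt c f x -> ContAt c g x.
Proof.
  intros E H eps He; destruct (H eps He) as (d & Hd & Hy); exists d; split; auto.
  intros y Hc; rewrite <- !E; auto.
Qed.

Lemma ContAt_plus f g x : ContAt c f x -> ContAt c g x -> ContAt c (fun z => f z + g z) x.
Proof.
  intros Hf Hg eps He.
  destruct (Hf (eps/2) ltac:(lra)) as (d1 & Hd1 & H1).
  destruct (Hg (eps/2) ltac:(lra)) as (d2 & Hd2 & H2).
  exists (Rmin d1 d2); split; [apply Rmin_pos; auto|].
  intros y Hy.
  assert (A1 : Rabs (f y - f x) < eps/2) by (apply H1; intro i; specialize (Hy i); pose proof (Rmin_l d1 d2); lra).
  assert (A2 : Rabs (g y - g x) < eps/2) by (apply H2; intro i; specialize (Hy i); pose proof (Rmin_r d1 d2); lra).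
  replace (f y + g y - (f x + g x)) with ((f y - f x) + (g y - g x)) by ring.
  pose proof (Rabs_triang (f y - f x) (g y - g x)); lra.
Qed.

Lemma ContAt_opp f x : ContAt c f x -> ContAt c (fun z => - f z) x.
Proof.
  intros Hf eps He; destruct (Hf eps He) as (d & Hd & H); exists d; split; auto.
  intros y Hy; replace (- f y - - f x) with (- (f y - f x)) by ring; rewrite Rabs_Ropp; auto.
Qed.

Lemma mult_bound a a0 b b0 e1 e2 : Rabs (a - a0) < e1 -> Rabs (b - b0) < e2 ->
  Rabs (a*b - a0*b0) <= (Rabs a0 + e1) * e2 + Rabs b0 * e1.
Proof.
  intros H1 H2.
  replace (a*b - a0*b0) with (a*(b-b0) + b0*(a-a0)) by ring.
  eapply Rle_trans; [apply Rabs_triang|]. rewrite !Rabs_mult.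
  assert (Rabs a <= Rabs a0 + e1).
  { replace a with (a0 + (a - a0)) by ring. pose proof (Rabs_triang a0 (a - a0)). lra. }
  pose proof (Rabs_pos a); pose proof (Rabs_pos b0); pose proof (Rabs_pos (b - b0)); pose proof (Rabs_pos (a-a0)).
  apply Rplus_le_compat; apply Rmult_le_compat; lra.
Qed.

Lemma ContAt_mult f g x : ContAt c f x -> ContAt c g x -> ContAt c (fun z => f z * g z) x.
Proof.
  intros Hf Hg eps He.
  set (A := Rabs (f x)). set (B := Rabs (g x)).
  assert (HA : 0 <= A) by apply Rabs_pos. assert (HB : 0 <= B) by apply Rabs_pos.
  set (e1 := Rmin 1 (eps / (2 * (B + 1)))).
  set (e2 := eps / (2 * (A + 1))).
  assert (He1 : 0 < e1) by (apply Rmin_pos; [lra|apply Rdiv_lt_0_compat; lra]).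
  assert (He2 : 0 < e2) by (apply Rdiv_lt_0_compat; lra).
  destruct (Hf e1 He1) as (d1 & Hd1 & H1).
  destruct (Hg e2 He2) as (d2 & Hd2 & H2).
  exists (Rmin d1 d2); split; [apply Rmin_pos; auto|].
  intros y Hy.
  assert (A1 : Rabs (f y - f x) < e1) by (apply H1; intro i; specialize (Hy i); pose proof (Rmin_l d1 d2); lra).
  assert (A2 : Rabs (g y - g x) < e2) by (apply H2; intro i; specialize (Hy i); pose proof (Rmin_r d1 d2); lra).
  eapply Rle_lt_trans; [apply (mult_bound _ _ _ _ e1 e2 A1 A2)|]. fold A B.
  assert (e1 <= 1) by apply Rmin_l.
  assert (e1 <= eps / (2 * (B + 1))) by apply Rmin_r.
  assert ((A + e1) * e2 <= eps / 2).
  { unfold e2. apply (Rle_trans _ ((A + 1) * (eps / (2 * (A + 1))))).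
    apply Rmult_le_compat_r; [left; apply Rdiv_lt_0_compat; lra|lra]. right; field; lra. }
  assert (B * e1 < eps / 2).
  { apply (Rle_lt_trans _ (B * (eps / (2 * (B + 1))))). apply Rmult_le_compat_l; lra.
    apply (Rmult_lt_reg_r (2 * (B + 1))); [lra|].
    replace (B * (eps / (2 * (B + 1))) * (2 * (B + 1))) with (B * eps) by (field; lra).
    nra. }
  lra.
Qed.

Lemma ContAt_inv f x : ContAt c f x -> f x <> 0 -> ContAt c (fun z => / f z) x.
Proof.
  intros Hf Hn eps He.
  set (A := Rabs (f x)). assert (HA : 0 < A) by (apply Rabs_pos_lt; auto).
  set (e1 := Rmin (A / 2) (eps * A * A / 2)).
  assert (He1 : 0 < e1).
  { apply Rmin_pos; [lra|]. apply Rdiv_lt_0_compat; [|lra]. repeat apply Rmult_lt_0_compat; auto. }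
  destruct (Hf e1 He1) as (d & Hd & H); exists d; split; auto.
  intros y Hy. specialize (H y Hy).
  assert (e1 <= A / 2) by apply Rmin_l.
  assert (e1 <= eps * A * A / 2) by apply Rmin_r.
  assert (HfyA : A / 2 < Rabs (f y)).
  { pose proof (Rabs_triang_inv (f x) (f x - f y)). replace (f x - (f x - f y)) with (f y) in H2 by ring.
    rewrite Rabs_minus_sym in H. fold A in H2. lra. }
  assert (Hfy : f y <> 0) by (intro E; rewrite E, Rabs_R0 in HfyA; lra).
  replace (/ f y - / f x) with ((f x - f y) / (f y * f x)) by (field; auto).
  unfold Rdiv. rewrite Rabs_mult, Rabs_inv, Rabs_mult. fold A. rewrite Rabs_minus_sym.
  assert (0 < Rabs (f y) * A) by (apply Rmult_lt_0_compat; lra).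
  apply (Rmult_lt_reg_r (Rabs (f y) * A)); [auto|].
  rewrite Rmult_assoc, Rinv_l by lra. rewrite Rmult_1_r.
  assert (eps * (A / 2 * A) <= eps * (Rabs (f y) * A)).
  { apply Rmult_le_compat_l; [lra|]. apply Rmult_le_compat_r; lra. }
  lra.
Qed.

Lemma ContAt_near_pos f x : ContAt c f x -> 0 < f x ->
  exists del, 0 < del /\ forall y, (forall i, Rabs (c i y - c i x) < del) -> 0 < f y.
Proof.
  intros Hf Hp. destruct (Hf (f x) Hp) as (d & Hd & H). exists d; split; auto.
  intros y Hy; specialize (H y Hy). apply Rabs_def2 in H. lra.
Qed.

Lemma ContAt_near_nz f x : ContAt c f x -> f x <> 0 ->
  exists del, 0 < del /\ forall y, (forall i, Rabs (c i y - c i x) < del) -> f y <> 0.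
Proof.
  intros Hf Hp. assert (HA : 0 < Rabs (f x)) by (apply Rabs_pos_lt; auto).
  destruct (Hf (Rabs (f x)) HA) as (d & Hd & H). exists d; split; auto.
  intros y Hy E; specialize (H y Hy). rewrite E in H.
  replace (0 - f x) with (- f x) in H by ring. rewrite Rabs_Ropp in H. lra.
Qed.
End Cont.

Lemma list_min {D : Type} (l : list D) (Q : D -> R -> Prop) :
  (forall d del del', Q d del -> 0 < del' <= del -> Q d del') ->
  (forall d, In d l -> exists del, 0 < del /\ Q d del) ->
  exists del, 0 < del /\ forall d, In d l -> Q d del.
Proof.
  intros Hm. induction l as [|a l IH]; intros H.
  - exists 1; split; [lra|]; intros d [].
  - destruct (H a (or_introl eq_refl)) as (d1 & Hd1 & Q1).
    destruct IH as (d2 & Hd2 & Q2); [intros d Hd; apply H; right; auto|].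
    exists (Rmin d1 d2); split; [apply Rmin_pos; auto|].
    intros d [<-|Hd].
    + eapply Hm; [exact Q1 | split; [apply Rmin_pos; auto | apply Rmin_l]].
    + eapply Hm; [exact (Q2 d Hd) | split; [apply Rmin_pos; auto | apply Rmin_r]].
Qed.

Definition ContMap {X Y C D : Type} (cX : C -> X -> R) (cY : D -> Y -> R) (F : X -> Y) (x : X) :=
  forall d, ContAt cX (fun z => cY d (F z)) x.

Lemma ContMap_close {X Y C D : Type} (cX : C -> X -> R) (cY : D -> Y -> R) (F : X -> Y) x
  (l : list D) : (forall d, In d l) -> ContMap cX cY F x ->
  forall eps, 0 < eps -> exists del, 0 < del /\ forall y, (forall i, Rabs (cX i y - cX i x) < del) ->
     forall d, Rabs (cY d (F y) - cY d (F x)) < eps.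
Proof.
  intros Hl HF eps He.
  destruct (list_min l (fun d del => forall y, (forall i, Rabs (cX i y - cX i x) < del) ->
     Rabs (cY d (F y) - cY d (F x)) < eps)) as (del & Hdel & H).
  - intros d del del' Hq [H1 H2] y Hy. apply Hq. intro i; specialize (Hy i); lra.
  - intros d _. apply (HF d eps He).
  - exists del; split; [auto|]. intros y Hy d. apply (H d (Hl d) y Hy).
Qed.

Lemma ContAt_comp {X Y C D : Type} (cX : C -> X -> R) (cY : D -> Y -> R) (F : X -> Y) (g : Y -> R) x
  (l : list D) : (forall d, In d l) -> ContMap cX cY F x -> ContAt cY g (F x) ->
  ContAt cX (fun z => g (F z)) x.
Proof.
  intros Hl HF Hg eps He.
  destruct (Hg eps He) as (d1 & Hd1 & H1).
  destruct (ContMap_close cX cY F x l Hl HF d1 Hd1) as (d2 & Hd2 & H2).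
  exists d2; split; auto.
Qed.

Lemma preimage_open {X Y C D : Type} (cX : C -> X -> R) (cY : D -> Y -> R) (F : X -> Y)
  (P : X -> Prop) (U : Y -> Prop) (l : list D) : (forall d, In d l) ->
  coord_open cX P -> (forall x, P x -> ContMap cX cY F x) -> coord_open cY U ->
  coord_open cX (fun x => P x /\ U (F x)).
Proof.
  intros Hl HP HF HU x [Px Ux].
  destruct (HP x Px) as (d1 & Hd1 & H1).
  destruct (HU (F x) Ux) as (e & He & H2).
  destruct (ContMap_close cX cY F x l Hl (HF x Px) e He) as (d2 & Hd2 & H3).
  exists (Rmin d1 d2); split; [apply Rmin_pos; auto|].
  intros y Hy; split.
  - apply H1; intro i; specialize (Hy i); pose proof (Rmin_l d1 d2); lra.
  - apply H2. apply H3. intro i; specialize (Hy i); pose proof (Rmin_r d1 d2); lra.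
Qed.


Definition r5c (i : I5) (y : R5) : R := y i.

Definition l_I4 := [i1; i2; i3; i4].
Definition l_cfg : list (bool * I4 * I4) :=
  flat_map (fun b => flat_map (fun m => map (fun k => (b, m, k)) l_I4) l_I4) [true; false].
Lemma cfg_all d : In d l_cfg.
Proof. destruct d as [[b m] k]; destruct b, m, k; simpl; tauto. Qed.
Definition l_5 := [c1; c2; c3; c4; c5].
Lemma l5_all d : In d l_5.
Proof. destruct d; simpl; tauto. Qed.
Definition l_pairs : list (I4 * I4) := flat_map (fun m => map (fun k => (m, k)) l_I4) l_I4.
Lemma pairs_all d : In d l_pairs.
Proof. destruct d as [m k]; destruct m, k; simpl; tauto. Qed.

Lemma evl_cont z i j : ContAt config_coord (fun w => evl w i j) z.
Proof.
  apply (ContAt_ext _ (fun w => config_coord (false, i, i1) w * config_coord (true, j, i1) w +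
     config_coord (false, i, i2) w * config_coord (true, j, i2) w +
     config_coord (false, i, i3) w * config_coord (true, j, i3) w +
     config_coord (false, i, i4) w * config_coord (true, j, i4) w)).
  { intro w; reflexivity. }
  repeat apply ContAt_plus; apply ContAt_mult; apply ContAt_coord.
Qed.

Definition P_nz (z : config) : Prop := forall i j, i <> j -> evl z i j <> 0.

Lemma P_nz_open : coord_open config_coord P_nz.
Proof.
  intros z Hz.
  destruct (list_min l_pairs (fun d del => fst d <> snd d -> forall y,
     (forall i, Rabs (config_coord i y - config_coord i z) < del) -> evl y (fst d) (snd d) <> 0))
    as (del & Hdel & H).
  - intros d del del' Hq [H1 H2] Hne y Hy. apply Hq; auto. intro i; specialize (Hy i); lra.
  - intros [i j] _. destruct (I4_dec i j) as [<-|n].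
    + exists 1; split; [lra|]. intro H; simpl in H; congruence.
    + destruct (ContAt_near_nz config_coord _ z (evl_cont z i j) (Hz i j n)) as (d & Hd & Hy).
      exists d; split; auto.
  - exists del; split; auto. intros y Hy i j n. apply (H (i, j) (pairs_all _) n y Hy).
Qed.

Ltac cont_tac := unfold Rdiv;
  repeat first [ apply ContAt_mult | apply ContAt_inv | apply evl_cont ].

Lemma ratios_cont z : P_nz z -> ContMap config_coord dpair_coord ratios z.
Proof.
  intros Hz [b s]. destruct b; EFcases s; simpl; unfold tri_ratio, edge_ratio; simpl; unfold Rdiv;
  (apply ContAt_mult; [repeat apply ContAt_mult; apply evl_cont|]);
  (apply ContAt_inv; [repeat apply ContAt_mult; apply evl_cont|]);
  repeat apply Rmult_integral_contrapositive_currified; apply Hz; discriminate.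
Qed.

Lemma conf5_cont y : pos5 y -> ContMap r5c config_coord conf5 y.
Proof.
  intros Hy [[b m] k]. destruct b.
  - apply (ContAt_ext _ (fun _ => delta4 m k)); [reflexivity|apply ContAt_const].
  - pose proof (Hy c4); pose proof (Hy c5).
    destruct m, k; simpl; try apply ContAt_const;
    repeat first [ apply ContAt_mult | apply (ContAt_coord r5c) | apply ContAt_inv ];
    try (apply (ContAt_coord r5c)); unfold r5c;
    repeat apply Rmult_integral_contrapositive_currified; lra.
Qed.

Lemma edge5_cont p : ContMap dpair_coord r5c edge5 p.
Proof.
  intros d; destruct d; simpl;
  [apply (ContAt_coord dpair_coord (false, s12)) | apply (ContAt_coord dpair_coord (false, s13))
  |apply (ContAt_coord dpair_coord (false, s23)) | apply (ContAt_coord dpair_coord (false, s14))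
  |apply (ContAt_coord dpair_coord (false, s24))].
Qed.

Lemma pos_open {X C : Type} (c : C -> X -> R) (f : I5 -> X -> R) :
  (forall x d, ContAt c (f d) x) -> coord_open c (fun x => forall d, 0 < f d x).
Proof.
  intros Hf x Hx.
  destruct (list_min l_5 (fun d del => forall y,
     (forall i, Rabs (c i y - c i x) < del) -> 0 < f d y)) as (del & Hdel & H).
  - intros d del del' Hq [H1 H2] y Hy. apply Hq. intro i; specialize (Hy i); lra.
  - intros d _. apply (ContAt_near_pos c _ x (Hf x d) (Hx d)).
  - exists del; split; auto. intros y Hy d. apply (H d (l5_all d) y Hy).
Qed.

Lemma pos5_open : coord_open r5c pos5.
Proof. apply (pos_open r5c (fun d y => y d)). intros x d. apply (ContAt_coord r5c). Qed.

Lemma pos_edge_open : coord_open dpair_coord (fun p => pos5 (edge5 p)).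
Proof. apply (pos_open dpair_coord (fun d p => edge5 p d)). intros x d. apply edge5_cont. Qed.

Lemma True_open {X C : Type} (c : C -> X -> R) : coord_open c (fun _ => True).
Proof. intros x _; exists 1; split; [lra|auto]. Qed.


Lemma sig_ext {A : Type} {P : A -> Prop} (a b : sig P) : proj1_sig a = proj1_sig b -> a = b.
Proof. destruct a, b; simpl; intros ->; f_equal; apply proof_irrelevance. Qed.

Lemma cls_eq (x y : Ltet) : relL x y -> cls relL x = cls relL y.
Proof.
  intro H. apply sig_ext; simpl. apply functional_extensionality; intro z.
  apply propositional_extensionality; unfold relL; split; intro Hz.
  - eapply flag_trans; [apply flag_sym, H|exact Hz].
  - eapply flag_trans; [exact H|exact Hz].
Qed.

Lemma ratios_inv (x y : Ltet) : relL x y -> ratios (proj1_sig x) = ratios (proj1_sig y).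
Proof.
  destruct x as [x Hx], y as [y Hy]; unfold relL; simpl; intro H.
  destruct (evl_equiv x y H) as (a & b & Hab & He).
  pose proof (tetra_nz x Hx) as Hnz.
  assert (HA : forall m, a m <> 0) by (intro m; apply Hab).
  assert (HB : forall m, b m <> 0) by (intro m; apply Hab).
  unfold ratios; f_equal; apply functional_extensionality; intro s; EFcases s;
  unfold tri_ratio, edge_ratio; simpl; rewrite !He; field;
  repeat split; first [apply HA | apply HB | apply Hnz; discriminate].
Qed.

Lemma pos_of_DT (p : DT) : pos5 (edge5 (proj1_sig p)).
Proof. destruct p as [p Hp]; intro i; destruct i; apply (proj1 (proj2 Hp)). Qed.

Definition l_EF : list EF := [mkEF (i1,i2,i3,i4); mkEF (i1,i3,i4,i2); mkEF (i1,i4,i2,i3);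
  mkEF (i2,i1,i4,i3); mkEF (i2,i3,i1,i4); mkEF (i2,i4,i3,i1); mkEF (i3,i1,i2,i4);
  mkEF (i3,i2,i4,i1); mkEF (i3,i4,i1,i2); mkEF (i4,i1,i3,i2); mkEF (i4,i2,i1,i3); mkEF (i4,i3,i2,i1)].
Definition l_dp : list (bool * EF) := flat_map (fun b => map (fun s => (b, s)) l_EF) [true; false].
Lemma dp_all d : In d l_dp.
Proof. destruct d as [b s]; destruct b; EFcases s; simpl; tauto. Qed.

Definition tet_sec (p : DT) : Ltet :=
  exist _ (conf5 (edge5 (proj1_sig p))) (conf5_tetra _ (pos_of_DT p)).

Definition rep (C : FLT) : Ltet :=
  proj1_sig (constructive_indefinite_description _ (proj2_sig C)).
Lemma rep_spec C : proj1_sig C = relL (rep C).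
Proof. unfold rep; destruct (constructive_indefinite_description _ _); simpl; auto. Qed.
Lemma rep_cls C : C = cls relL (rep C).
Proof. apply sig_ext; simpl; apply rep_spec. Qed.

Definition h1 (C : FLT) : DT :=
  exist _ (ratios (proj1_sig (rep C))) (ratios_DT _ (proj2_sig (rep C))).

Lemma h1_spec (x : Ltet) : proj1_sig (h1 (cls relL x)) = ratios (proj1_sig x).
Proof.
  simpl. symmetry. apply ratios_inv.
  pose proof (rep_spec (cls relL x)) as E; simpl in E. rewrite E. apply flag_refl.
Qed.

Definition g1 (p : DT) : FLT := cls relL (tet_sec p).

Lemma homeo_comp {X Y Z : Type} oX oY oZ (f : X -> Y) (g : Y -> Z) :
  homeomorphism oX oY f -> homeomorphism oY oZ g -> homeomorphism oX oZ (fun x => g (f x)).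
Proof.
  intros (f' & H1 & H2 & H3 & H4) (g' & K1 & K2 & K3 & K4).
  exists (fun z => f' (g' z)); split; [|split; [|split]].
  - intro x; rewrite K1, H1; auto.
  - intro z; rewrite H2, K2; auto.
  - intros V HV. apply (H3 _ (K3 _ HV)).
  - intros V HV. apply (K4 _ (H4 _ HV)).
Qed.

Lemma part1 : exists h : FLT -> DT,
      (forall x : Ltet, proj1_sig (h (cls relL x)) = ratios (proj1_sig x)) /\
      homeomorphism FLT_open DT_open h.
Proof.
  exists h1; split; [exact h1_spec|].
  exists g1; split; [|split; [|split]].
  - intro C. transitivity (cls relL (rep C)); [|symmetry; apply rep_cls].
    unfold g1. apply cls_eq.
    unfold relL, tet_sec, h1; simpl.
    apply flag_sym, normal_form, (proj2_sig (rep C)).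
  - intro p. apply sig_ext. unfold g1; rewrite h1_spec. unfold tet_sec; simpl.
    apply DT_det; [apply ratios_DT, conf5_tetra, pos_of_DT | apply (proj2_sig p)|].
    apply edge5_conf5, pos_of_DT.
  - intros V (U & HU & HV).
    unfold FLT_open, quot_open, Ltet_open.
    exists (fun w => P_nz w /\ U (ratios w)); split.
    + apply (preimage_open config_coord dpair_coord ratios P_nz U
        l_dp dp_all).
      * exact P_nz_open.
      * exact ratios_cont.
      * exact HU.
    + intro z. rewrite HV, h1_spec. split; [intro; split; auto|intros [_ ?]; auto].
      intros i j; apply tetra_nz, (proj2_sig z).
  - intros W HW. destruct HW as (U0 & HU0 & HW).
    exists (fun q => pos5 (edge5 q) /\ U0 (conf5 (edge5 q))); split.
    + apply (preimage_open dpair_coord config_coord (fun q => conf5 (edge5 q)) _ U0 l_cfg cfg_all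
        pos_edge_open); [|exact HU0].
      intros q Hq d. apply (ContAt_comp dpair_coord r5c edge5 (fun y => config_coord d (conf5 y)) q l_5 l5_all (edge5_cont q)).
      apply conf5_cont; auto.
    + intro p. unfold g1. rewrite HW. unfold tet_sec; simpl.
      split; [intro; split; auto; apply pos_of_DT|intros [_ ?]; auto].
Qed.

Definition h2 (p : DT) : P5 := exist _ (edge5 (proj1_sig p)) (pos_of_DT p).
Definition g2 (y : P5) : DT :=
  exist _ (ratios (conf5 (proj1_sig y))) (ratios_DT _ (conf5_tetra _ (proj2_sig y))).

Lemma part2 : exists h : DT -> P5,
      (forall p : DT, proj1_sig (h p) = edge5 (proj1_sig p)) /\
      homeomorphism DT_open P5_open h.
Proof.
  exists h2; split; [reflexivity|].
  exists g2; split; [|split; [|split]].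
  - intro p. apply sig_ext; simpl.
    apply DT_det; [apply ratios_DT, conf5_tetra, pos_of_DT | apply (proj2_sig p)|].
    apply edge5_conf5, pos_of_DT.
  - intro y. apply sig_ext; simpl. apply edge5_conf5, (proj2_sig y).
  - intros V (U & HU & HV).
    exists (fun q => True /\ U (edge5 q)); split.
    + apply (preimage_open dpair_coord r5c edge5 _ U l_5 l5_all (True_open _)); [|exact HU].
      intros q _; apply edge5_cont.
    + intro p. unfold h2. rewrite HV; simpl. tauto.
  - intros V (U & HU & HV).
    exists (fun y => pos5 y /\ U (ratios (conf5 y))); split.
    + apply (preimage_open r5c dpair_coord (fun y => ratios (conf5 y)) _ U l_dp dp_all pos5_open);
        [|exact HU].
      intros y Hy d.
      apply (ContAt_comp r5c config_coord conf5 (fun w => dpair_coord d (ratios w)) y l_cfg cfg_all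
        (conf5_cont y Hy)).
      apply ratios_cont. intros i j; apply tetra_nz, conf5_tetra, Hy.
    + intro y. unfold g2. rewrite HV; simpl. split; [intro; split; auto; apply (proj2_sig y)|tauto].
Qed.

Close Scope R_scope.
Theorem theorem2p6 :
  (exists h : FLT -> DT,
      (forall x : Ltet, proj1_sig (h (cls relL x)) = ratios (proj1_sig x)) /\
      homeomorphism FLT_open DT_open h) /\
  (exists h : DT -> P5,
      (forall p : DT, proj1_sig (h p) = edge5 (proj1_sig p)) /\
      homeomorphism DT_open P5_open h) /\
  (exists h : FLT -> P5, homeomorphism FLT_open P5_open h).
Proof.
  split; [exact part1|split; [exact part2|]].
  destruct part1 as (f & _ & Hf). destruct part2 as (g & _ & Hg).
  exists (fun x => g (f x)). exact (homeo_comp _ _ _ f g Hf Hg).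
Qed.
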